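(* For all $a,b>0$, $A(a,b)\le\lambda_s(a,b)\le S(a,b)$ whenever $2\le s\le 5$. These bounds are best possible: the inequality $A(a,b)\le\lambda_s(a,b)$ holds for all $a,b>0$ if and only if $s\ge 2$, and the inequality $\lambda_s(a,b)\le S(a,b)$ holds for all $a,b>0$ if and only if $s\le 5$.
   Context: For $a,b>0$ with $a\neq b$ define $$\lambda_s(a,b)=\begin{cases}\dfrac{s-1}{s+1}\cdot\dfrac{a^{s+1}+b^{s+1}-2\left(\frac{a+b}{2}\right)^{s+1}}{a^s+b^s-2\left(\frac{a+b}{2}\right)^s}, & s\in\mathbb{R}\setminus\{-1,0,1\},\\[3mm] \dfrac{2\log\frac{a+b}{2}-\log a-\log b}{\frac{1}{2a}+\frac{1}{2b}-\frac{2}{a+b}}, & s=-1,\\[3mm] \dfrac{a\log a+b\log b-(a+b)\log\frac{a+b}{2}}{2\log\frac{a+b}{2}-\log a-\log b}, & s=0,\\[3mm] \dfrac{(b-a)^2}{4\left(a\log a+b\log b-(a+b)\log\frac{a+b}{2}\right)}, & s=1,\end{cases}$$ and $\lambda_s(a,a)=a$. The arithmetic mean is $A(a,b)=(a+b)/2$ and the Gini mean is $S(a,b)=a^{a/(a+b)}\,b^{b/(a+b)}$. *)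

(* Defs.v *)
From Stdlib Require Import Reals Lra.
Open Scope R_scope.

Definition AM (a b : R) : R := (a + b) / 2.

Definition Gini (a b : R) : R :=
  Rpower a (a / (a + b)) * Rpower b (b / (a + b)).

Definition lambda (s a b : R) : R :=
  if Req_EM_T a b then a
  else if Req_EM_T s (-1) then
    (2 * ln ((a + b) / 2) - ln a - ln b) /
    (1 / (2 * a) + 1 / (2 * b) - 2 / (a + b))
  else if Req_EM_T s 0 then
    (a * ln a + b * ln b - (a + b) * ln ((a + b) / 2)) /
    (2 * ln ((a + b) / 2) - ln a - ln b)
  else if Req_EM_T s 1 then
    (b - a) ^ 2 / (4 * (a * ln a + b * ln b - (a + b) * ln ((a + b) / 2)))
  else
    (s - 1) / (s + 1) *
    ((Rpower a (s + 1) + Rpower b (s + 1) - 2 * Rpower ((a + b) / 2) (s + 1)) /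
     (Rpower a s + Rpower b s - 2 * Rpower ((a + b) / 2) s)).

(* Main.v *)
Require Import Defs.
From Stdlib Require Import Reals Lra.
From Coquelicot Require Import Coquelicot.
Open Scope R_scope.


Lemma taylL (g g1 g2 : R -> R) a c :
  a <= c ->
  (forall x, a <= x <= c -> is_derive g x (g1 x)) ->
  (forall x, a <= x <= c -> is_derive g1 x (g2 x)) ->
  (forall x, a <= x <= c -> continuous g2 x) ->
  is_RInt (fun x => (x - a) * g2 x) a c ((c - a) * g1 c - g c + g a).
Proof.
intros Hac Hg Hg1 Hc.
set (F := fun x => (x - a) * g1 x - g x).
replace ((c - a) * g1 c - g c + g a) with (minus (F c) (F a)).
2:{ unfold F, minus, plus, opp; simpl. ring. }
apply (@is_RInt_derive R_CompleteNormedModule F).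
- intros x Hx. rewrite Rmin_left in Hx by lra. rewrite Rmax_right in Hx by lra.
  unfold F.
  apply is_derive_ext with (f := fun y => (y - a) * g1 y - g y). { intros; reflexivity. }
  replace ((x - a) * g2 x) with ((1 * g1 x + (x - a) * g2 x) - g1 x) by ring.
  apply (is_derive_minus (fun y => (y - a) * g1 y) g).
  + apply (is_derive_mult (fun y => y - a) g1).
    * auto_derive; auto; ring.
    * apply Hg1; lra.
    * intros; apply Rmult_comm.
  + apply Hg; lra.
- intros x Hx. rewrite Rmin_left in Hx by lra. rewrite Rmax_right in Hx by lra.
  apply (continuous_mult (fun y => y - a) g2).
  + apply (continuous_minus (fun y:R => y) (fun _ => a)); [apply continuous_id| apply continuous_const].
  + apply Hc; lra.
Qed.

Lemma taylR (g g1 g2 : R -> R) c b :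
  c <= b ->
  (forall x, c <= x <= b -> is_derive g x (g1 x)) ->
  (forall x, c <= x <= b -> is_derive g1 x (g2 x)) ->
  (forall x, c <= x <= b -> continuous g2 x) ->
  is_RInt (fun x => (b - x) * g2 x) c b (g b - (b - c) * g1 c - g c).
Proof.
intros Hac Hg Hg1 Hc.
set (F := fun x => (b - x) * g1 x + g x).
replace (g b - (b - c) * g1 c - g c) with (minus (F b) (F c)).
2:{ unfold F, minus, plus, opp; simpl. ring. }
apply (@is_RInt_derive R_CompleteNormedModule F).
- intros x Hx. rewrite Rmin_left in Hx by lra. rewrite Rmax_right in Hx by lra.
  unfold F.
  replace ((b - x) * g2 x) with (((-1) * g1 x + (b - x) * g2 x) + g1 x) by ring.
  apply (is_derive_plus (fun y => (b - y) * g1 y) g).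
  + apply (is_derive_mult (fun y => b - y) g1).
    * auto_derive; auto; ring.
    * apply Hg1; lra.
    * intros; apply Rmult_comm.
  + apply Hg; lra.
- intros x Hx. rewrite Rmin_left in Hx by lra. rewrite Rmax_right in Hx by lra.
  apply (continuous_mult (fun y => b - y) g2).
  + apply (continuous_minus (fun _ => b) (fun y:R => y)); [apply continuous_const| apply continuous_id].
  + apply Hc; lra.
Qed.

Definition Mom a b p :=
  RInt (fun x => (x - a) * Rpower x p) a ((a + b) / 2) +
  RInt (fun x => (b - x) * Rpower x p) ((a + b) / 2) b.

Lemma der_Rpower q x : 0 < x -> is_derive (fun y => Rpower y q) x (q * Rpower x (q - 1)).
Proof. intros; apply is_derive_Reals, derivable_pt_lim_power; auto. Qed.

Lemma cont_Rpower q x : 0 < x -> continuous (fun y => Rpower y q) x.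
Proof. intros H. apply (@ex_derive_continuous R_AbsRing R_NormedModule). eexists. apply der_Rpower; auto. Qed.

Lemma Mom_delta a b p (g g1 : R -> R) : 0 < a < b ->
  (forall x, a <= x <= b -> is_derive g x (g1 x)) ->
  (forall x, a <= x <= b -> is_derive g1 x (Rpower x p)) ->
  Mom a b p = g a + g b - 2 * g ((a + b) / 2).
Proof.
intros Hab Hg Hg1.
unfold Mom.
rewrite (is_RInt_unique _ _ _ _ (taylL g g1 (fun x => Rpower x p) a ((a+b)/2) ltac:(lra)
   ltac:(intros; apply Hg; lra) ltac:(intros; apply Hg1; lra)
   ltac:(intros; apply cont_Rpower; lra))).
rewrite (is_RInt_unique _ _ _ _ (taylR g g1 (fun x => Rpower x p) ((a+b)/2) b ltac:(lra)
   ltac:(intros; apply Hg; lra) ltac:(intros; apply Hg1; lra)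
   ltac:(intros; apply cont_Rpower; lra))).
field.
Qed.

Lemma Mom_gen a b p : 0 < a < b -> p <> -1 -> p <> -2 ->
  Mom a b p = (Rpower a (p+2) + Rpower b (p+2) - 2 * Rpower ((a+b)/2) (p+2)) / ((p+1)*(p+2)).
Proof.
intros Hab H1 H2.
assert (Hp1 : p + 1 <> 0) by lra. assert (Hp2 : p + 2 <> 0) by lra.
rewrite (Mom_delta a b p (fun x => Rpower x (p+2) / ((p+1)*(p+2))) (fun x => Rpower x (p+1) / (p+1))); auto.
- field; auto.
- intros x Hx.
  replace (Rpower x (p+1) / (p+1)) with (/((p+1)*(p+2)) * ((p+2) * Rpower x (p+2-1))).
  2:{ replace (p+2-1) with (p+1) by ring. field; auto. }
  apply is_derive_ext with (f := fun y => /((p+1)*(p+2)) * Rpower y (p+2)).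
  { intros; unfold Rdiv; apply Rmult_comm. }
  apply (is_derive_scal (fun y => Rpower y (p+2))). apply der_Rpower; lra.
- intros x Hx.
  replace (Rpower x p) with (/(p+1) * ((p+1) * Rpower x (p+1-1))).
  2:{ replace (p+1-1) with p by ring. field; auto. }
  apply is_derive_ext with (f := fun y => /(p+1) * Rpower y (p+1)).
  { intros; unfold Rdiv; apply Rmult_comm. }
  apply (is_derive_scal (fun y => Rpower y (p+1))). apply der_Rpower; lra.
Qed.

Lemma Rpower_m1 x : 0 < x -> Rpower x (-1) = / x.
Proof. intros; replace (-1) with (- (1)) by ring; rewrite Rpower_Ropp, Rpower_1; auto. Qed.
Lemma Rpower_m2 x : 0 < x -> Rpower x (-2) = / (x * x).
Proof. intros; replace (-2) with (- (2)) by ring; rewrite Rpower_Ropp. replace 2 with (INR 2) by (simpl; ring).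
 rewrite Rpower_pow; auto. simpl. f_equal. ring. Qed.

Lemma Mom_m1 a b : 0 < a < b ->
  Mom a b (-1) = a * ln a + b * ln b - (a + b) * ln ((a + b) / 2).
Proof.
intros Hab.
rewrite (Mom_delta a b (-1) (fun x => x * ln x - x) ln); auto.
- field.
- intros x Hx. auto_derive. lra. field. lra.
- intros x Hx. rewrite Rpower_m1 by lra. auto_derive. lra. field; lra.
Qed.

Lemma Mom_m2 a b : 0 < a < b ->
  Mom a b (-2) = 2 * ln ((a + b) / 2) - ln a - ln b.
Proof.
intros Hab.
rewrite (Mom_delta a b (-2) (fun x => - ln x) (fun x => - / x)); auto.
- field.
- intros x Hx. auto_derive. lra. field. lra.
- intros x Hx. rewrite Rpower_m2 by lra. auto_derive. lra. field; lra.
Qed.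

Lemma Rpower_pos x p : 0 < Rpower x p.
Proof. unfold Rpower; apply exp_pos. Qed.

Lemma contL a p x : 0 < x -> continuous (fun y => (y - a) * Rpower y p) x.
Proof. intros. apply (continuous_mult (fun y => y - a) (fun y => Rpower y p)).
 apply (continuous_minus (fun y:R => y) (fun _ => a)); [apply continuous_id| apply continuous_const].
 apply cont_Rpower; auto. Qed.
Lemma contR b p x : 0 < x -> continuous (fun y => (b - y) * Rpower y p) x.
Proof. intros. apply (continuous_mult (fun y => b - y) (fun y => Rpower y p)).
 apply (continuous_minus (fun _ => b) (fun y:R => y)); [apply continuous_const| apply continuous_id].
 apply cont_Rpower; auto. Qed.

Lemma exL a c p : 0 < a <= c -> ex_RInt (fun y => (y - a) * Rpower y p) a c.
Proof. intros. apply (ex_RInt_continuous (V:=R_CompleteNormedModule)). intros z Hz.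
 rewrite Rmin_left in Hz by lra. rewrite Rmax_right in Hz by lra. apply contL; lra. Qed.
Lemma exR c b p : 0 < c <= b -> ex_RInt (fun y => (b - y) * Rpower y p) c b.
Proof. intros. apply (ex_RInt_continuous (V:=R_CompleteNormedModule)). intros z Hz.
 rewrite Rmin_left in Hz by lra. rewrite Rmax_right in Hz by lra. apply contR; lra. Qed.

Lemma RInt_lin (f g : R -> R) u v al be : ex_RInt f u v -> ex_RInt g u v ->
  RInt (fun x => al * f x + be * g x) u v = al * RInt f u v + be * RInt g u v.
Proof.
intros Hf Hg.
rewrite (RInt_plus (V:=R_CompleteNormedModule) (fun x => al * f x) (fun x => be * g x)).
- pose proof (RInt_scal (V:=R_CompleteNormedModule) f u v al Hf) as E1.
  pose proof (RInt_scal (V:=R_CompleteNormedModule) g u v be Hg) as E2.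
  simpl in E1, E2. unfold scal, mult in E1, E2; simpl in E1, E2. unfold mult in E1, E2; simpl in E1, E2.
  change (plus (RInt (fun x => al * f x) u v) (RInt (fun x => be * g x) u v) = al * RInt f u v + be * RInt g u v).
  rewrite E1, E2. reflexivity.
- apply (ex_RInt_scal (V:=R_NormedModule) f u v al Hf).
- apply (ex_RInt_scal (V:=R_NormedModule) g u v be Hg).
Qed.

Lemma ex_lin (f g : R -> R) u v al be : ex_RInt f u v -> ex_RInt g u v ->
  ex_RInt (fun x => al * f x + be * g x) u v.
Proof.
intros Hf Hg.
apply (ex_RInt_plus (V:=R_NormedModule) (fun x => al * f x) (fun x => be * g x)).
- apply (ex_RInt_scal (V:=R_NormedModule) f u v al Hf).
- apply (ex_RInt_scal (V:=R_NormedModule) g u v be Hg).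
Qed.

Lemma Mom_pos a b p : 0 < a < b -> 0 < Mom a b p.
Proof.
intros H. unfold Mom.
assert (0 < RInt (fun x => (x - a) * Rpower x p) a ((a + b) / 2)).
{ apply RInt_gt_0. lra. intros x Hx. apply Rmult_lt_0_compat. lra. apply Rpower_pos.
  intros; apply contL; lra. }
assert (0 < RInt (fun x => (b - x) * Rpower x p) ((a + b) / 2) b).
{ apply RInt_gt_0. lra. intros x Hx. apply Rmult_lt_0_compat. lra. apply Rpower_pos.
  intros; apply contR; lra. }
lra.
Qed.

Lemma Rpower_2 x : 0 < x -> Rpower x 2 = x * x.
Proof. intros. replace 2 with (INR 2) by (simpl; ring). rewrite Rpower_pow; auto. simpl; ring. Qed.

Lemma lam_Mom s a b : 0 < a < b -> lambda s a b = Mom a b (s - 1) / Mom a b (s - 2).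
Proof.
intros Hab.
assert (Hm : 0 < (a + b) / 2) by lra.
pose proof (Mom_pos a b (s-1) Hab) as P1. pose proof (Mom_pos a b (s-2) Hab) as P2.
unfold lambda.
destruct (Req_EM_T a b) as [E|_]. lra.
destruct (Req_EM_T s (-1)) as [E|N1].
{ subst s. replace (-1-1) with (-2) by ring. replace (-1-2) with (-3) by ring.
  replace (-1-2) with (-3) in P2 by ring.
  rewrite Mom_m2 by auto. rewrite (Mom_gen a b (-3)) in * by (auto; lra).
  replace (-3+2) with (-1) in * by ring. rewrite !Rpower_m1 in * by lra.
  set (Q := / a + / b - 2 * / ((a + b) / 2)) in *.
  assert (Q <> 0). { intro E. rewrite E in P2. unfold Rdiv in P2. rewrite Rmult_0_l in P2. lra. }
  replace (1 / (2 * a) + 1 / (2 * b) - 2 / (a + b)) with (Q / 2) by (unfold Q; field; lra).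
  field. repeat split; lra. }
destruct (Req_EM_T s 0) as [E|N0].
{ subst s. replace (0-1) with (-1) by ring. replace (0-2) with (-2) by ring.
  rewrite Mom_m2, Mom_m1 by auto. reflexivity. }
destruct (Req_EM_T s 1) as [E|N1'].
{ subst s. replace (1-1) with 0 by ring. replace (1-2) with (-1) by ring.
  replace (1-2) with (-1) in P2 by ring. rewrite Mom_m1 in P2 by auto.
  rewrite Mom_m1 by auto. rewrite (Mom_gen a b 0) by (auto; lra).
  replace (0+2) with 2 by ring. rewrite !Rpower_2 by lra.
  field. lra. }
rewrite (Mom_gen a b (s-1)) in * by (auto; lra).
rewrite (Mom_gen a b (s-2)) in * by (auto; lra).
replace (s-1+2) with (s+1) in * by ring.
replace (s-2+2) with s in * by ring.
replace (s-1+1) with s in * by ring.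
replace (s-2+1) with (s-1) in * by ring.
replace (s-2+2) with s in * by ring.
set (F1 := Rpower a (s + 1) + Rpower b (s + 1) - 2 * Rpower ((a + b) / 2) (s + 1)) in *.
set (F0 := Rpower a s + Rpower b s - 2 * Rpower ((a + b) / 2) s) in *.
assert (F0 <> 0).
{ intro E. rewrite E in P2. unfold Rdiv in P2. rewrite Rmult_0_l in P2. lra. }
field. repeat split; try lra.
Qed.

Lemma D_pos x c e : 0 < x -> 0 < c -> 0 < e -> x <> c ->
  0 < (x - c) * (Rpower x e - Rpower c e).
Proof.
intros. destruct (Rlt_or_le x c).
- assert (Rpower x e < Rpower c e) by (apply Rlt_Rpower_l; lra). nra.
- assert (Rpower c e < Rpower x e) by (apply Rlt_Rpower_l; lra). nra.
Qed.

Lemma D_id x s r c : 0 < x ->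
  Rpower x (r-1) - c * Rpower x (r-2) - Rpower c (r-s) * (Rpower x (s-1) - c * Rpower x (s-2))
  = Rpower x (s-2) * ((x - c) * (Rpower x (r-s) - Rpower c (r-s))).
Proof.
intros Hx.
replace (r-1) with ((s-2) + (r-s) + 1) by ring.
replace (r-2) with ((s-2) + (r-s)) by ring.
replace (s-1) with ((s-2) + 1) by ring.
rewrite !Rpower_plus, Rpower_1 by auto. ring.
Qed.

Lemma piece_comb (w : R -> R) u v (p1 p2 p3 p4 c k : R) :
  ex_RInt (fun x => w x * Rpower x p1) u v ->
  ex_RInt (fun x => w x * Rpower x p2) u v ->
  ex_RInt (fun x => w x * Rpower x p3) u v ->
  ex_RInt (fun x => w x * Rpower x p4) u v ->
  RInt (fun x => w x * (Rpower x p1 - c * Rpower x p2 - k * (Rpower x p3 - c * Rpower x p4))) u v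
  = RInt (fun x => w x * Rpower x p1) u v - c * RInt (fun x => w x * Rpower x p2) u v
    - k * (RInt (fun x => w x * Rpower x p3) u v - c * RInt (fun x => w x * Rpower x p4) u v).
Proof.
intros H1 H2 H3 H4.
rewrite (RInt_ext _ (fun x => 1 * (1 * (w x * Rpower x p1) + (-c) * (w x * Rpower x p2)) +
   (-k) * (1 * (w x * Rpower x p3) + (-c) * (w x * Rpower x p4)))).
2:{ intros x _; change ((w x * (Rpower x p1 - c * Rpower x p2 - k * (Rpower x p3 - c * Rpower x p4)))%R = (1 * (1 * (w x * Rpower x p1) + (-c) * (w x * Rpower x p2)) + (-k) * (1 * (w x * Rpower x p3) + (-c) * (w x * Rpower x p4)))%R); ring. }
rewrite RInt_lin.
2:{ apply ex_lin; auto. }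
2:{ apply ex_lin; auto. }
rewrite !RInt_lin by auto. match goal with |- ?l = ?r => change (@eq R l r) end. ring.
Qed.

Lemma lam_strict a b s r : 0 < a < b -> s < r -> lambda s a b < lambda r a b.
Proof.
intros Hab Hsr.
rewrite !lam_Mom by auto.
pose proof (Mom_pos a b (s-1) Hab) as P1. pose proof (Mom_pos a b (s-2) Hab) as P2.
pose proof (Mom_pos a b (r-1) Hab) as P3. pose proof (Mom_pos a b (r-2) Hab) as P4.
set (c := Mom a b (s-1) / Mom a b (s-2)).
assert (Hc : 0 < c) by (unfold c; apply Rdiv_lt_0_compat; auto).
set (k := Rpower c (r-s)).
set (m := (a+b)/2).
set (D := fun x => Rpower x (r-1) - c * Rpower x (r-2) - k * (Rpower x (s-1) - c * Rpower x (s-2))).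
assert (HD : forall x, 0 < x -> x <> c -> 0 < D x).
{ intros x Hx Hxc. unfold D, k. rewrite D_id by auto.
  apply Rmult_lt_0_compat. apply Rpower_pos. apply D_pos; auto; lra. }
assert (HD0 : forall x, 0 < x -> 0 <= D x).
{ intros x Hx. destruct (Req_dec x c). subst x. unfold D, k. rewrite D_id by auto. nra.
  left; apply HD; auto. }
assert (EL : RInt (fun x => (x - a) * D x) a m =
  RInt (fun x => (x - a) * Rpower x (r-1)) a m - c * RInt (fun x => (x - a) * Rpower x (r-2)) a m
  - k * (RInt (fun x => (x - a) * Rpower x (s-1)) a m - c * RInt (fun x => (x - a) * Rpower x (s-2)) a m)).
{ unfold D. apply (piece_comb (fun x => x - a)); apply exL; unfold m; lra. }
assert (ER : RInt (fun x => (b - x) * D x) m b =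
  RInt (fun x => (b - x) * Rpower x (r-1)) m b - c * RInt (fun x => (b - x) * Rpower x (r-2)) m b
  - k * (RInt (fun x => (b - x) * Rpower x (s-1)) m b - c * RInt (fun x => (b - x) * Rpower x (s-2)) m b)).
{ unfold D. apply (piece_comb (fun x => b - x)); apply exR; unfold m; lra. }
assert (Hsum : RInt (fun x => (x - a) * D x) a m + RInt (fun x => (b - x) * D x) m b
   = Mom a b (r-1) - c * Mom a b (r-2) - k * (Mom a b (s-1) - c * Mom a b (s-2))).
{ rewrite EL, ER. unfold Mom. fold m. ring. }
assert (Hz : Mom a b (s-1) - c * Mom a b (s-2) = 0) by (unfold c; field; lra).
rewrite Hz, Rmult_0_r, Rminus_0_r in Hsum.
assert (Dcont : forall x, 0 < x -> continuous D x).
{ intros x Hx. unfold D.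
  apply (@ex_derive_continuous R_AbsRing R_NormedModule).
  unfold Rpower. auto_derive. repeat split; lra. }
assert (Hpos : 0 < RInt (fun x => (x - a) * D x) a m + RInt (fun x => (b - x) * D x) m b).
{ destruct (Rle_or_lt m c).
  - assert (0 < RInt (fun x => (x - a) * D x) a m).
    { apply RInt_gt_0. unfold m; lra.
      intros x Hx. apply Rmult_lt_0_compat. lra. apply HD; lra.
      intros x Hx. apply (continuous_mult (fun y => y - a) D).
      apply (continuous_minus (fun y:R => y) (fun _ => a)); [apply continuous_id| apply continuous_const].
      apply Dcont; lra. }
    assert (0 <= RInt (fun x => (b - x) * D x) m b).
    { apply RInt_ge_0. unfold m; lra.
      apply (ex_RInt_continuous (V:=R_CompleteNormedModule)). intros z Hz0.
      rewrite Rmin_left in Hz0 by (unfold m; lra). rewrite Rmax_right in Hz0 by (unfold m; lra).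
      apply (continuous_mult (fun y => b - y) D).
      apply (continuous_minus (fun _ => b) (fun y:R => y)); [apply continuous_const| apply continuous_id].
      apply Dcont; unfold m in Hz0; lra.
      intros x Hx. apply Rmult_le_pos. lra. apply HD0; unfold m in Hx; lra. }
    lra.
  - assert (0 < RInt (fun x => (b - x) * D x) m b).
    { apply RInt_gt_0. unfold m; lra.
      intros x Hx. apply Rmult_lt_0_compat. lra. apply HD; lra.
      intros x Hx. apply (continuous_mult (fun y => b - y) D).
      apply (continuous_minus (fun _ => b) (fun y:R => y)); [apply continuous_const| apply continuous_id].
      apply Dcont; unfold m in Hx; lra. }
    assert (0 <= RInt (fun x => (x - a) * D x) a m).
    { apply RInt_ge_0. unfold m; lra.
      apply (ex_RInt_continuous (V:=R_CompleteNormedModule)). intros z Hz0.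
      rewrite Rmin_left in Hz0 by (unfold m; lra). rewrite Rmax_right in Hz0 by (unfold m; lra).
      apply (continuous_mult (fun y => y - a) D).
      apply (continuous_minus (fun y:R => y) (fun _ => a)); [apply continuous_id| apply continuous_const].
      apply Dcont; unfold m in Hz0; lra.
      intros x Hx. apply Rmult_le_pos. lra. apply HD0; unfold m in Hx; lra. }
    lra. }
rewrite Hsum in Hpos.
apply (Rmult_lt_reg_r (Mom a b (r-2))); auto.
replace (Mom a b (r - 1) / Mom a b (r - 2) * Mom a b (r - 2)) with (Mom a b (r - 1)) by (field; lra). lra.
Qed.

Lemma incr_der (f df : R -> R) x0 x1 : x0 <= x1 ->
  (forall x, x0 <= x <= x1 -> is_derive f x (df x)) ->
  (forall x, x0 <= x <= x1 -> 0 <= df x) -> f x0 <= f x1.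
Proof.
intros H Hd Hp. destruct H as [H|H]; [|subst; lra].
destruct (MVT_cor2 f df x0 x1 H) as [c [Ec Hc]].
{ intros c Hc. apply is_derive_Reals, Hd; auto. }
assert (0 <= df c) by (apply Hp; lra). nra.
Qed.

Definition Pu u := 30 + 8 * u + 2 * u ^ 2.
Definition Qu u := (15 + 15 * u + u ^ 2) * (2 + u).
Definition Nt t := 30 + 30 * t ^ 2 + 2 * t ^ 4.
Definition Dt t := 30 + 15 * t ^ 2.
Definition phi t := ((1 - t) * ln (1 - t) + (1 + t) * ln (1 + t)) / 2.

Definition Xu u := Pu u * Qu u + 2 * u * ((8 + 4 * u) * Qu u - Pu u * (45 + 34 * u + 3 * u^2)).

Lemma G_nonneg t : 0 <= t < 1 ->
  0 <= (ln (1 + t) - ln (1 - t)) / 2 - t * Pu (t^2) / Qu (t^2).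
Proof.
intros Ht.
set (G := fun y => (ln (1 + y) - ln (1 - y)) / 2 - y * Pu (y^2) / Qu (y^2)).
change (0 <= G t).
assert (G0 : G 0 = 0). { unfold G, Pu, Qu. rewrite Rplus_0_r, Rminus_0_r, ln_1. field. } rewrite <- G0.
apply (incr_der G (fun y => 1 / (1 - y^2) - Xu (y^2) / (Qu (y^2))^2)).
- lra.
- intros x Hx. unfold G, Xu, Pu, Qu. auto_derive.
  + repeat split; try lra. nra.
  + field. repeat split; try lra; nra.
- intros x Hx.
  assert (Hu : 0 <= x^2 < 1) by nra.
  set (u := x^2) in *.
  assert (HQ : 0 < Qu u) by (unfold Qu; nra).
  assert (E : Qu u ^ 2 - (1 - u) * Xu u = u * (4230 + 3285*u + 736*u^2 + 353*u^3 + 46*u^4 - u^5))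
    by (unfold Xu, Qu, Pu; ring).
  assert (0 <= u * (4230 + 3285*u + 736*u^2 + 353*u^3 + 46*u^4 - u^5)).
  { apply Rmult_le_pos. lra. assert (u^5 <= 1). { replace 1 with (1^5) by ring. apply pow_incr. lra. }
    assert (0 <= u^2) by nra. assert (0 <= u^3) by (apply pow_le; lra). assert (0 <= u^4) by (apply pow_le; lra). lra. }
  replace (1 / (1 - u) - Xu u / Qu u ^ 2) with ((Qu u ^ 2 - (1 - u) * Xu u) / ((1 - u) * Qu u ^ 2)) by (field; lra).
  apply Rdiv_le_0_compat. lra. apply Rmult_lt_0_compat. lra. nra.
Qed.

Lemma F_nonneg t : 0 <= t < 1 -> ln (Nt t) - ln (Dt t) <= phi t.
Proof.
intros Ht.
set (F := fun y => phi y - ln (Nt y) + ln (Dt y)).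
assert (F0 : F 0 = 0).
{ unfold F, phi, Nt, Dt. rewrite Rplus_0_r, Rminus_0_r, ln_1.
  replace (30 + 30 * 0 ^ 2 + 2 * 0 ^ 4) with (30 + 15 * 0 ^ 2) by ring. field. }
assert (0 <= F t).
{ rewrite <- F0.
  apply (incr_der F (fun y => (ln (1 + y) - ln (1 - y)) / 2 - y * Pu (y^2) / Qu (y^2))).
  - lra.
  - intros x Hx. unfold F, phi, Nt, Dt, Pu, Qu. auto_derive.
    + repeat split; try lra; nra.
    + replace (1 + - x) with (1 - x) by ring. field. repeat split; try lra; nra.
  - intros x Hx. apply G_nonneg; lra. }
unfold F in H. lra.
Qed.

Lemma Rpow_n x n : 0 < x -> Rpower x (INR n) = x ^ n.
Proof. apply Rpower_pow. Qed.

Lemma lam5 a b : 0 < a < b -> lambda 5 a b =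
  4 / 6 * ((a ^ 6 + b ^ 6 - 2 * ((a + b) / 2) ^ 6) / (a ^ 5 + b ^ 5 - 2 * ((a + b) / 2) ^ 5)).
Proof.
intros H. unfold lambda.
destruct (Req_EM_T a b); [lra|].
destruct (Req_EM_T 5 (-1)); [lra|].
destruct (Req_EM_T 5 0); [lra|].
destruct (Req_EM_T 5 1); [lra|].
replace (5 + 1) with (INR 6) by (simpl; ring).
replace 5 with (INR 5) by (simpl; ring).
rewrite !Rpow_n by lra.
replace (INR 5 - 1) with 4 by (simpl; ring). replace (INR 6) with 6 by (simpl; ring).
reflexivity.
Qed.

Lemma lam5_Gini a b : 0 < a < b -> lambda 5 a b <= Gini a b.
Proof.
intros H. rewrite lam5 by auto.
set (m := (a + b) / 2). set (t := (b - a) / (a + b)).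
assert (Ha : a = m * (1 - t)) by (unfold m, t; field; lra).
assert (Hb : b = m * (1 + t)) by (unfold m, t; field; lra).
assert (Hm : 0 < m) by (unfold m; lra).
assert (Ht : 0 < t < 1).
{ unfold t; split. apply Rdiv_lt_0_compat; lra.
  apply (Rmult_lt_reg_r (a + b)). lra. unfold Rdiv; rewrite Rmult_assoc, Rinv_l; lra. }
assert (E1 : 4 / 6 * ((a ^ 6 + b ^ 6 - 2 * m ^ 6) / (a ^ 5 + b ^ 5 - 2 * m ^ 5)) = m * (Nt t / Dt t)).
{ rewrite Ha, Hb. unfold Nt, Dt. field. split. nra.
  assert (0 < t^2) by nra.
  replace ((m * (1 - t)) ^ 5 + (m * (1 + t)) ^ 5 - 2 * m ^ 5) with (m^5 * t^2 * (20 + 10 * t^2)) by ring.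
  apply Rgt_not_eq. apply Rmult_lt_0_compat. apply Rmult_lt_0_compat. apply pow_lt; lra. lra. nra. }
rewrite E1.
assert (E2 : Gini a b = m * exp (phi t)).
{ unfold Gini, Rpower. rewrite <- exp_plus.
  replace (a / (a + b) * ln a + b / (a + b) * ln b) with (ln m + phi t).
  rewrite exp_plus, exp_ln by auto. reflexivity.
  unfold phi. rewrite Ha, Hb. rewrite !ln_mult by lra.
  replace (m * (1 - t) + m * (1 + t)) with (2 * m) by ring. field. lra. }
rewrite E2.
apply Rmult_le_compat_l. lra.
assert (HN : 0 < Nt t) by (unfold Nt; nra). assert (HD : 0 < Dt t) by (unfold Dt; nra).
rewrite <- (exp_ln (Nt t / Dt t)) by (apply Rdiv_lt_0_compat; auto).
unfold Rdiv. rewrite ln_mult, ln_Rinv by (auto; apply Rinv_0_lt_compat; auto).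
pose proof (F_nonneg t ltac:(lra)).
destruct (Rle_lt_or_eq_dec _ _ H0) as [L|L].
- left; apply exp_increasing. lra.
- right. f_equal. lra.
Qed.

Definition Wint a b (f : R -> R) :=
  RInt (fun x => (x - a) * f x) a ((a + b) / 2) +
  RInt (fun x => (b - x) * f x) ((a + b) / 2) b.

Lemma Wint_delta a b (f g g1 : R -> R) : a < b ->
  (forall x, a <= x <= b -> is_derive g x (g1 x)) ->
  (forall x, a <= x <= b -> is_derive g1 x (f x)) ->
  (forall x, a <= x <= b -> continuous f x) ->
  Wint a b f = g a + g b - 2 * g ((a + b) / 2).
Proof.
intros Hab Hg Hg1 Hc.
unfold Wint.
rewrite (is_RInt_unique _ _ _ _ (taylL g g1 f a ((a+b)/2) ltac:(lra)
   ltac:(intros; apply Hg; lra) ltac:(intros; apply Hg1; lra)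
   ltac:(intros; apply Hc; lra))).
rewrite (is_RInt_unique _ _ _ _ (taylR g g1 f ((a+b)/2) b ltac:(lra)
   ltac:(intros; apply Hg; lra) ltac:(intros; apply Hg1; lra)
   ltac:(intros; apply Hc; lra))).
field.
Qed.

Lemma Wint_ex a b f : a < b -> (forall x, a <= x <= b -> continuous f x) ->
  ex_RInt (fun x => (x - a) * f x) a ((a + b) / 2) /\
  ex_RInt (fun x => (b - x) * f x) ((a + b) / 2) b.
Proof.
intros H Hc. split; apply (ex_RInt_continuous (V:=R_CompleteNormedModule)); intros z Hz;
 rewrite Rmin_left in Hz by lra; rewrite Rmax_right in Hz by lra.
- apply (continuous_mult (fun y => y - a) f).
  apply (continuous_minus (fun y:R => y) (fun _ => a)); [apply continuous_id| apply continuous_const].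
  apply Hc; lra.
- apply (continuous_mult (fun y => b - y) f).
  apply (continuous_minus (fun _ => b) (fun y:R => y)); [apply continuous_const| apply continuous_id].
  apply Hc; lra.
Qed.

Lemma Wint_lin a b (f g : R -> R) al be : a < b ->
  (forall x, a <= x <= b -> continuous f x) ->
  (forall x, a <= x <= b -> continuous g x) ->
  Wint a b (fun x => al * f x + be * g x) = al * Wint a b f + be * Wint a b g.
Proof.
intros H Hf Hg. destruct (Wint_ex a b f H Hf) as [F1 F2]. destruct (Wint_ex a b g H Hg) as [G1 G2].
unfold Wint.
rewrite (RInt_ext (fun x => (x - a) * (al * f x + be * g x)) (fun x => al * ((x - a) * f x) + be * ((x - a) * g x))).
2:{ intros x _. change ((x - a) * (al * f x + be * g x) = al * ((x - a) * f x) + be * ((x - a) * g x))%R. ring. }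
rewrite (RInt_ext (fun x => (b - x) * (al * f x + be * g x)) (fun x => al * ((b - x) * f x) + be * ((b - x) * g x))).
2:{ intros x _. change ((b - x) * (al * f x + be * g x) = al * ((b - x) * f x) + be * ((b - x) * g x))%R. ring. }
rewrite !RInt_lin by auto. ring.
Qed.

Lemma Wint_ge0 a b f : a < b ->
  (forall x, a <= x <= b -> continuous f x) ->
  (forall x, a <= x <= b -> 0 <= f x) -> 0 <= Wint a b f.
Proof.
intros H Hc Hp. destruct (Wint_ex a b f H Hc) as [F1 F2]. unfold Wint.
assert (0 <= RInt (fun x => (x - a) * f x) a ((a + b) / 2)).
{ apply RInt_ge_0; auto. lra. intros x Hx. apply Rmult_le_pos. lra. apply Hp; lra. }
assert (0 <= RInt (fun x => (b - x) * f x) ((a + b) / 2) b).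
{ apply RInt_ge_0; auto. lra. intros x Hx. apply Rmult_le_pos. lra. apply Hp; lra. }
lra.
Qed.

Lemma Mom_W a b p : Mom a b p = Wint a b (fun x => Rpower x p).
Proof. reflexivity. Qed.

Lemma Rpower_1l c : Rpower 1 c = 1.
Proof. unfold Rpower. rewrite ln_1, Rmult_0_r, exp_0. reflexivity. Qed.

Lemma bern z q : 0 < z -> 1 <= q -> 1 + q * (z - 1) <= Rpower z q.
Proof.
intros Hz Hq.
set (h := fun y => Rpower y q - 1 - q * (y - 1)).
assert (h1 : h 1 = 0) by (unfold h; rewrite Rpower_1l; ring).
assert (Hd : forall y, 0 < y -> is_derive h y (q * (Rpower y (q - 1) - 1))).
{ intros y Hy. unfold h.
  auto_derive.
  - eexists; apply der_Rpower; auto.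
  - rewrite (is_derive_unique (fun x : R => Rpower x q) y _ (der_Rpower q y Hy)). ring. }
assert (0 <= h z).
{ destruct (Rle_or_lt 1 z).
  - rewrite <- h1. apply (incr_der h (fun y => q * (Rpower y (q - 1) - 1))); auto.
    + intros; apply Hd; lra.
    + intros x Hx. apply Rmult_le_pos. lra.
      assert (Rpower 1 (q-1) <= Rpower x (q-1)).
      apply Rle_Rpower_l; lra. rewrite Rpower_1l in H0. lra.
  - set (h' := fun y => - h y).
    assert (h' z <= h' 1).
    { apply (incr_der h' (fun y => - (q * (Rpower y (q - 1) - 1)))). lra.
      intros x Hx. apply (is_derive_opp h). apply Hd; lra.
      intros x Hx. assert (Rpower x (q-1) <= Rpower 1 (q-1)). apply Rle_Rpower_l; lra.
      rewrite Rpower_1l in H0. nra. }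
    unfold h' in H0. lra. }
unfold h in H. lra.
Qed.

Lemma tangent x y q : 0 < x -> 0 < y -> 1 <= q ->
  Rpower x q + q * Rpower x (q - 1) * (y - x) <= Rpower y q.
Proof.
intros Hx Hy Hq.
pose proof (bern (y / x) q ltac:(apply Rdiv_lt_0_compat; auto) Hq).
assert (E : Rpower y q = Rpower x q * Rpower (y / x) q).
{ rewrite Rpower_mult_distr by (auto; apply Rdiv_lt_0_compat; auto). f_equal. field. lra. }
assert (E2 : Rpower x (q - 1) = Rpower x q / x).
{ replace q with ((q - 1) + 1) at 2 by ring. rewrite Rpower_plus, Rpower_1 by auto. field. lra. }
rewrite E, E2. pose proof (Rpower_pos x q).
replace (Rpower x q + q * (Rpower x q / x) * (y - x)) with (Rpower x q * (1 + q * (y / x - 1))) by (field; lra).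
apply Rmult_le_compat_l; lra.
Qed.

Lemma pw_lower t q x : 0 < t < 1 -> 1 <= q -> 1 - t <= x <= 1 + t ->
  q * Rpower (1 - t) (q - 1) * (x - 1) ^ 2 <= (x - 1) * (Rpower x q - 1).
Proof.
intros Ht Hq Hx.
assert (K1 : Rpower (1 - t) (q - 1) <= 1).
{ pose proof (Rle_Rpower_l (1 - t) 1 (q - 1) ltac:(lra) ltac:(lra)) as K. rewrite Rpower_1l in K. exact K. }
pose proof (Rpower_pos (1 - t) (q - 1)).
destruct (Rle_or_lt 1 x).
- pose proof (bern x q ltac:(lra) Hq).
  assert (0 <= (x - 1)^2) by nra.
  assert (q * Rpower (1 - t) (q - 1) * (x - 1) ^ 2 <= q * (x - 1)^2).
  { rewrite Rmult_assoc. apply Rmult_le_compat_l. lra. nra. }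
  nra.
- pose proof (tangent x 1 q ltac:(lra) ltac:(lra) Hq). rewrite Rpower_1l in H1.
  assert (Rpower (1 - t) (q - 1) <= Rpower x (q - 1)) by (apply Rle_Rpower_l; lra).
  assert (q * Rpower (1 - t) (q - 1) * (1 - x) <= q * Rpower x (q - 1) * (1 - x)).
  { apply Rmult_le_compat_r. lra. apply Rmult_le_compat_l; lra. }
  nra.
Qed.

Lemma phi_bound t : 0 <= t <= 1/2 -> phi t <= t^2/2 + t^4/9.
Proof.
intros Ht.
set (P1 := fun y => y + 4 * y^3 / 9 - (ln (1 + y) - ln (1 - y)) / 2).
assert (HP1 : forall y, 0 <= y <= 1/2 -> 0 <= P1 y).
{ intros y Hy.
  assert (E : P1 0 = 0) by (unfold P1; rewrite Rplus_0_r, Rminus_0_r, ln_1; field).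
  rewrite <- E. apply (incr_der P1 (fun x => 1 + 4 * x^2 / 3 - 1 / (1 - x^2))). lra.
  - intros x Hx. unfold P1. auto_derive. repeat split; lra.
    replace (1 + - x) with (1 - x) by ring. field. repeat split; nra.
  - intros x Hx. assert (0 <= x^2 <= 1/4) by nra.
    replace (1 + 4 * x ^ 2 / 3 - 1 / (1 - x ^ 2)) with ((x^2/3 - 4 * (x^2)^2/3) / (1 - x^2)) by (field; lra).
    apply Rdiv_le_0_compat; [|lra]. set (u := x^2) in *. simpl. 
    assert (0 <= u * (1/4 - u)) by (apply Rmult_le_pos; lra). lra. }
set (P := fun y => y^2/2 + y^4/9 - phi y).
assert (E : P 0 = 0) by (unfold P, phi; rewrite Rplus_0_r, Rminus_0_r, ln_1; field).
assert (0 <= P t).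
{ rewrite <- E. apply (incr_der P P1). lra.
  - intros x Hx. unfold P, P1, phi. auto_derive. repeat split; lra.
    replace (1 + - x) with (1 - x) by ring. field. repeat split; nra.
  - intros x Hx. apply HP1; lra. }
unfold P in H. lra.
Qed.

Lemma Wint_ext a b f g : a < b -> (forall x, a <= x <= b -> f x = g x) -> Wint a b f = Wint a b g.
Proof.
intros H E. unfold Wint. f_equal; apply RInt_ext; intros x Hx;
rewrite Rmin_left in Hx by lra; rewrite Rmax_right in Hx by lra; rewrite E by lra; reflexivity.
Qed.

Ltac cont := let x := fresh in let Hx := fresh in intros x Hx;
  apply (@ex_derive_continuous R_AbsRing R_NormedModule); unfold Rpower; auto_derive; repeat split; lra.

Lemma W1 t : 0 < t < 1 -> Wint (1 - t) (1 + t) (fun _ => 1) = t^2.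
Proof.
intros H. rewrite (Wint_delta _ _ _ (fun x => x^2/2) (fun x => x)). field.
lra. intros; auto_derive; auto; field. intros; auto_derive; auto.
intros; apply continuous_const.
Qed.

Lemma W2 t : 0 < t < 1 -> Wint (1 - t) (1 + t) (fun x => x - 1) = 0.
Proof.
intros H. rewrite (Wint_delta _ _ _ (fun x => (x-1)^3/6) (fun x => (x-1)^2/2)). field.
lra. intros; auto_derive; auto; field. intros; auto_derive; auto; field.
cont.
Qed.

Lemma W3 t : 0 < t < 1 -> Wint (1 - t) (1 + t) (fun x => (x - 1)^2) = t^4/6.
Proof.
intros H. rewrite (Wint_delta _ _ _ (fun x => (x-1)^4/12) (fun x => (x-1)^3/3)). field.
lra. intros; auto_derive; auto; field. intros; auto_derive; auto; field.
cont.
Qed.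

Lemma Gini_norm t : 0 < t < 1 -> Gini (1 - t) (1 + t) = exp (phi t).
Proof.
intros Ht. unfold Gini, Rpower, phi. rewrite <- exp_plus. f_equal.
replace (1 - t + (1 + t)) with 2 by ring. field.
Qed.

Lemma exp_le_inv y : y < 1 -> exp y <= 1 / (1 - y).
Proof.
intros H. pose proof (exp_ineq1_le (- y)).
assert (exp y * exp (- y) = 1) by (rewrite <- exp_plus; replace (y + - y) with 0 by ring; apply exp_0).
pose proof (exp_pos y). apply (Rmult_le_reg_r (1 - y)). lra.
replace (1 / (1 - y) * (1 - y)) with 1 by (field; lra). nra.
Qed.

Lemma ln1p_le t : 0 < t -> ln (1 + t) <= t.
Proof.
intros H. rewrite <- (ln_exp t) at 2. apply ln_le. lra.
pose proof (exp_ineq1_le t). lra.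
Qed.

Lemma witness s : 5 < s -> exists a b, 0 < a /\ 0 < b /\ Gini a b < lambda s a b.
Proof.
intros Hs.
set (q := s - 2). set (e := q - 3).
assert (Hq : 3 < q) by (unfold q; lra). assert (He : 0 < e) by (unfold e; lra).
set (t := e / (100 * (q^2 + e))).
assert (Hq2 : 9 < q^2) by nra.
assert (Ht0 : 0 < t) by (unfold t; apply Rdiv_lt_0_compat; nra).
assert (Ht1 : t * (100 * q^2) <= e).
{ unfold t. apply (Rmult_le_reg_r (100 * (q^2 + e))). nra.
  replace (e / (100 * (q ^ 2 + e)) * (100 * q ^ 2) * (100 * (q ^ 2 + e))) with (e * (100 * q^2)) by (field; nra). nra. }
assert (Ht2 : t * 100 <= 1).
{ unfold t. apply (Rmult_le_reg_r (100 * (q^2 + e))). nra.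
  replace (e / (100 * (q ^ 2 + e)) * 100 * (100 * (q ^ 2 + e))) with (e * 100) by (field; nra). nra. }
assert (Hqt : q * t <= 1/100).
{ assert (q * t * (100 * q) <= e) by nra. assert (e < q) by (unfold e; lra). nra. }
assert (T1 : t <= 1/100) by lra.
assert (T2 : t^2 <= t/100) by (simpl; nra).
assert (T4 : t^4 <= t^2) by (replace (t^4) with (t^2 * t^2) by ring; assert (0 <= t^2) by nra; nra).
exists (1 - t), (1 + t). split; [lra|]. split; [lra|].
assert (Hab : 0 < 1 - t < 1 + t) by lra.
rewrite lam_Mom by auto.
rewrite Gini_norm by lra.
set (kap := q * Rpower (1 - t) (q - 1)).
remember (1 - t) as a eqn:Ea. remember (1 + t) as b eqn:Eb.
pose proof (Mom_pos a b (s-2) Hab) as M2.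
assert (Dlow : kap * t^4 / 6 <= Mom a b (s-1) - Mom a b (s-2)).
{ assert (G : 0 <= Wint a b (fun x => 1 * (1 * Rpower x (s-1) + (-1) * Rpower x (s-2))
                 + (-1) * (1 * (x - 1) + kap * (x - 1)^2))).
  { apply Wint_ge0. lra. cont.
    intros x Hx.
    replace (s - 1) with (q + 1) by (unfold q; ring). fold q.
    rewrite Rpower_plus, Rpower_1 by lra.
    pose proof (pw_lower t q x ltac:(lra) ltac:(lra) ltac:(lra)).
    rewrite <- Ea in H. fold kap in H. nra. }
  rewrite Wint_lin in G by (lra || cont).
  rewrite !Wint_lin in G by (lra || cont).
  rewrite <- !Mom_W in G. rewrite Ea, Eb in G |- *. rewrite W2, W3 in G by lra.
  unfold kap in *. rewrite Ea in *. lra. }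
assert (Dup : Mom a b (s-2) <= Rpower (1 + t) q * t^2).
{ assert (G : 0 <= Wint a b (fun x => Rpower (1 + t) q * 1 + (-1) * Rpower x (s-2))).
  { apply Wint_ge0. lra. cont.
    intros x Hx. fold q. assert (Rpower x q <= Rpower (1 + t) q).
    apply Rle_Rpower_l; lra. lra. }
  rewrite Wint_lin in G by (lra || cont).
  rewrite <- !Mom_W in G. rewrite Ea, Eb in G |- *. rewrite W1 in G by lra. lra. }
assert (Kl : q * (1 - (q - 1) * t) <= kap).
{ unfold kap. rewrite Ea. pose proof (bern (1 - t) (q - 1) ltac:(lra) ltac:(lra)). nra. }
assert (Ru : Rpower (1 + t) q <= 1 / (1 - q * t)).
{ unfold Rpower. eapply Rle_trans. 2: apply exp_le_inv; nra.
  destruct (Rle_lt_or_eq_dec (q * ln (1 + t)) (q * t)) as [L|L].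
  - pose proof (ln1p_le t Ht0). nra.
  - left; apply exp_increasing; auto.
  - right; rewrite L; reflexivity. }
assert (Pb : exp (phi t) <= 1 / (1 - (t^2/2 + t^4/9))).
{ eapply Rle_trans. 2: apply exp_le_inv; nra.
  pose proof (phi_bound t ltac:(lra)).
  destruct (Rle_lt_or_eq_dec _ _ H) as [L|L].
  - left; apply exp_increasing; auto.
  - right; rewrite L; reflexivity. }
set (L := q * (1 - 2 * q * t) * t^2 / 6).
assert (Hlam : 1 + L <= Mom a b (s-1) / Mom a b (s-2)).
{ assert (HR : 0 < Rpower (1 + t) q) by apply Rpower_pos.
  assert (Mom a b (s-2) * (1 + L) <= Mom a b (s-1)).
  { assert (kap * t^4 / 6 >= Mom a b (s-2) * L).
    { assert (Mom a b (s-2) * (1 - q * t) <= t^2).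
      { assert (Rpower (1 + t) q * (1 - q * t) <= 1).
        { apply (Rmult_le_compat_r (1 - q * t)) in Ru. 2: nra.
          replace (1 / (1 - q * t) * (1 - q * t)) with 1 in Ru by (field; nra). lra. }
        nra. }
      assert (q * (1 - 2 * q * t) <= kap * (1 - q * t)).
      { assert (0 < 1 - q * t) by nra.
        assert (q * (1 - (q - 1) * t) * (1 - q * t) <= kap * (1 - q * t)) by (apply Rmult_le_compat_r; lra).
        assert (0 <= q * ((q - 1) * t * (q * t)) + q * t) by (assert (0 <= (q-1)*t) by nra; assert (0 <= q*t) by nra; nra).
        nra. }
      unfold L. assert (0 <= t^2) by nra.
      assert (Kp : 0 < kap) by (unfold kap; apply Rmult_lt_0_compat; [lra| apply Rpower_pos]).
      set (M := Mom a b (s-2)) in *.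
      assert (A1 : M * (q * (1 - 2 * q * t)) <= M * (kap * (1 - q * t))) by (apply Rmult_le_compat_l; lra).
      assert (A2 : kap * (M * (1 - q * t)) <= kap * t^2) by (apply Rmult_le_compat_l; lra).
      assert (A3 : M * (q * (1 - 2 * q * t)) <= kap * t^2) by nra.
      assert (A4 : M * (q * (1 - 2 * q * t)) * (t^2/6) <= kap * t^2 * (t^2/6)) by (apply Rmult_le_compat_r; lra).
      replace (kap * t^4/6) with (kap * t^2 * (t^2/6)) by field.
      replace (M * (q * (1 - 2 * q * t) * t ^ 2 / 6)) with (M * (q * (1 - 2 * q * t)) * (t^2/6)) by field.
      lra. }
    nra. }
  apply (Rmult_le_reg_r (Mom a b (s-2))). auto.
  replace (Mom a b (s - 1) / Mom a b (s - 2) * Mom a b (s - 2)) with (Mom a b (s - 1)) by (field; lra).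
  lra. }
assert (Fin : 1 / (1 - (t^2/2 + t^4/9)) < 1 + L).
{ assert (Hst : t^2 <= t / 100) by nra.
  assert (0 < t^2) by nra.
  assert (Hphi : t^2/2 + t^4/9 <= t^2) by nra.
  assert (LL : t^2/2 + 49 * e * t^2 / 300 <= L).
  { unfold L. assert (2 * q * q * t <= e / 50) by nra.
    assert (q * (1 - 2 * q * t) >= 3 + 49 * e / 50) by (unfold e in *; nra). nra. }
  assert (LU : L <= q * t^2 / 6) by (unfold L; nra).
  apply (Rmult_lt_reg_r (1 - (t^2/2 + t^4/9))). nra.
  replace (1 / (1 - (t ^ 2 / 2 + t ^ 4 / 9)) * (1 - (t ^ 2 / 2 + t ^ 4 / 9))) with 1 by (field; nra).
  assert (t^2 * (1/9 + q/6) < 49 * e / 300).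
  { assert (t * q <= e / (100 * q)) by (apply (Rmult_le_reg_r (100 * q)); [nra|]; field_simplify; nra).
    nra. }
  nra. }
lra.
Qed.

Lemma lam2 a b : 0 < a < b -> lambda 2 a b = AM a b.
Proof.
intros H. unfold lambda, AM.
destruct (Req_EM_T a b); [lra|].
destruct (Req_EM_T 2 (-1)); [lra|].
destruct (Req_EM_T 2 0); [lra|].
destruct (Req_EM_T 2 1); [lra|].
replace (2 + 1) with (INR 3) by (simpl; ring).
replace (Rpower a 2) with (a^2) by (rewrite Rpower_2 by lra; ring).
replace (Rpower b 2) with (b^2) by (rewrite Rpower_2 by lra; ring).
replace (Rpower ((a+b)/2) 2) with (((a+b)/2)^2) by (rewrite Rpower_2 by lra; ring).
rewrite !Rpow_n by lra.
replace (INR 3) with 3 by (simpl; ring). field. intro E. assert (0 < (b - a)^2) by nra. nra. Qed.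

Lemma lam_sym s a b : lambda s a b = lambda s b a.
Proof.
unfold lambda.
destruct (Req_EM_T a b) as [E|N]; destruct (Req_EM_T b a) as [E'|N']; try (subst; reflexivity); try lra.
replace (b + a) with (a + b) by ring.
destruct (Req_EM_T s (-1)). f_equal; ring.
destruct (Req_EM_T s 0). f_equal; ring.
destruct (Req_EM_T s 1). f_equal; ring.
f_equal. f_equal; ring.
Qed.

Lemma Gini_sym a b : Gini a b = Gini b a.
Proof. unfold Gini. replace (b + a) with (a + b) by ring. ring. Qed.
Lemma AM_sym a b : AM a b = AM b a.
Proof. unfold AM. field. Qed.

Lemma lam_eq s a : 0 < a -> lambda s a a = a /\ AM a a = a /\ Gini a a = a.
Proof.
intros H. unfold lambda, AM, Gini. destruct (Req_EM_T a a); [|lra].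
split; [reflexivity|]. split; [field|].
rewrite <- Rpower_plus. replace (a / (a + a) + a / (a + a)) with 1 by (field; lra).
apply Rpower_1; auto.
Qed.

Lemma wlog_ab (P : R -> R -> Prop) :
  (forall a b, P a b -> P b a) -> (forall a, 0 < a -> P a a) ->
  (forall a b, 0 < a < b -> P a b) -> forall a b, 0 < a -> 0 < b -> P a b.
Proof.
intros Hs He Hl a b Ha Hb. destruct (Rtotal_order a b) as [L|[E|G]].
- apply Hl; lra.
- subst; apply He; auto.
- apply Hs, Hl; lra.
Qed.

Theorem theorem3 :
  (forall s : R, 2 <= s <= 5 ->
     forall a b : R, 0 < a -> 0 < b ->
       AM a b <= lambda s a b /\ lambda s a b <= Gini a b) /\
  (forall s : R,
     (forall a b : R, 0 < a -> 0 < b -> AM a b <= lambda s a b) <-> 2 <= s) /\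
  (forall s : R,
     (forall a b : R, 0 < a -> 0 < b -> lambda s a b <= Gini a b) <-> s <= 5).
Proof.
assert (Low : forall s, 2 <= s -> forall a b, 0 < a -> 0 < b -> AM a b <= lambda s a b).
{ intros s Hs. apply (wlog_ab (fun a b => AM a b <= lambda s a b)).
  - intros a b. rewrite AM_sym, lam_sym; auto.
  - intros a Ha. destruct (lam_eq s a Ha) as [E1 [E2 _]]. lra.
  - intros a b Hab. rewrite <- lam2 by auto. destruct (Req_dec s 2). subst; lra.
    left; apply lam_strict; auto; lra. }
assert (Up : forall s, s <= 5 -> forall a b, 0 < a -> 0 < b -> lambda s a b <= Gini a b).
{ intros s Hs. apply (wlog_ab (fun a b => lambda s a b <= Gini a b)).
  - intros a b. rewrite Gini_sym, lam_sym; auto.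
  - intros a Ha. destruct (lam_eq s a Ha) as [E1 [_ E3]]. lra.
  - intros a b Hab. eapply Rle_trans. 2: apply lam5_Gini; auto.
    destruct (Req_dec s 5). subst; lra. left; apply lam_strict; auto; lra. }
split; [|split].
- intros s Hs a b Ha Hb. split; [apply Low|apply Up]; auto; lra.
- intros s. split; [|intros; apply Low; auto].
  intros H. destruct (Rle_or_lt 2 s) as [L|L]; auto. exfalso.
  specialize (H 1 2 ltac:(lra) ltac:(lra)).
  rewrite <- lam2 in H by lra. pose proof (lam_strict 1 2 s 2 ltac:(lra) L). lra.
- intros s. split; [|intros; apply Up; auto].
  intros H. destruct (Rle_or_lt s 5) as [L|L]; auto. exfalso.
  destruct (witness s L) as [a [b [Ha [Hb W]]]]. specialize (H a b Ha Hb). lra.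
Qed.
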